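(* Let a pairwise majority rule be $\lambda$-bounded, let $Z^*$ be a point of the metric space minimizing $SC$ over the whole space, and let $\delta_I=SC(P)/\min_{Z\in\mathcal C}SC(Z)$ be the distortion of the selected candidate $P$, assumed $>1$. (i) If $|\mathcal C|=2$ and $P$ wins under the rule, then $SC(P)/SC(Z^* )\le\frac{\lambda\delta_I}{\delta_I-1}$. (ii) If $\mathcal C$ is arbitrary and $P$ is in the uncovered set of the pairwise majority graph formed by the rule, then $SC(P)/SC(Z^* )\le\frac{2\lambda\delta_I}{\delta_I-1}$.
   Context: Voters $N$ and candidates $\mathcal C$ are points of an arbitrary metric space $(X,d)$; $SC(Y)=\sum_{i\in N}d(i,Y)$ for any $Y\in X$. A pairwise majority rule decides, for each pair of candidates, which one beats the other. It is $\lambda$-bounded if whenever $P$ beats $Q$ we have $SC(P)\le SC(Q)+\lambda\,SC(Z)$ for every point $Z\in X$. A candidate $P$ is in the uncovered set of the resulting graph if for every other candidate $Z$, either $P$ beats $Z$, or there is $Y$ with $P$ beating $Y$ and $Y$ beating $Z$. *)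

(* Defs.v *)
From Stdlib Require Import Reals List.
Import ListNotations.
Open Scope R_scope.

Definition is_metric {X : Type} (d : X -> X -> R) : Prop :=
  (forall x y, 0 <= d x y) /\
  (forall x y, d x y = 0 <-> x = y) /\
  (forall x y, d x y = d y x) /\
  (forall x y z, d x z <= d x y + d y z).

(* Social cost SC(Y) = sum over voters i of d(i,Y); voters form a finite list
   (a multiset: several voters may sit at the same point). *)
Definition SC {X : Type} (d : X -> X -> R) (N : list X) (Y : X) : R :=
  fold_right (fun i acc => d i Y + acc) 0 N.

Definition minSC {X : Type} (d : X -> X -> R) (N : list X) (C : list X) : R :=
  match C with
  | [] => 0
  | c :: cs => fold_right (fun z acc => Rmin (SC d N z) acc) (SC d N c) cs
  end.

Definition pairwise_rule {X : Type} (C : list X) (beats : X -> X -> Prop) : Prop :=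
  forall P Q, In P C -> In Q C -> P <> Q ->
    (beats P Q \/ beats Q P) /\ ~ (beats P Q /\ beats Q P).

Definition lambda_bounded {X : Type} (d : X -> X -> R) (N C : list X)
  (beats : X -> X -> Prop) (lam : R) : Prop :=
  forall P Q, In P C -> In Q C -> beats P Q ->
    forall Z : X, SC d N P <= SC d N Q + lam * SC d N Z.

Definition wins {X : Type} (C : list X) (beats : X -> X -> Prop) (P : X) : Prop :=
  In P C /\ forall Q, In Q C -> Q <> P -> beats P Q.

Definition uncovered {X : Type} (C : list X) (beats : X -> X -> Prop) (P : X) : Prop :=
  In P C /\ forall Z, In Z C -> Z <> P ->
    beats P Z \/ exists Y, In Y C /\ beats P Y /\ beats Y Z.

(* Main.v *)
Require Import Defs.
From Stdlib Require Import Reals List Lra.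
Open Scope R_scope.

Lemma key (k S m T : R) : 0 < m -> m < S -> 0 < T -> S - m <= k * T ->
  S / T <= k * (S / m) / (S / m - 1).
Proof.
  intros Hm HS HT H.
  replace (k * (S / m) / (S / m - 1)) with (S / (S - m) * k) by (field; lra).
  replace (S / T) with (S / (S - m) * ((S - m) / T)) by (field; lra).
  apply Rmult_le_compat_l.
  - unfold Rdiv; apply Rmult_le_pos; [lra|]. left; apply Rinv_0_lt_compat; lra.
  - apply (Rmult_le_reg_r T); auto.
    unfold Rdiv; rewrite Rmult_assoc, Rinv_l by lra. lra.
Qed.

Lemma SC_nonneg {X : Type} (d : X -> X -> R) (N : list X) Y :
  (forall x y, 0 <= d x y) -> 0 <= SC d N Y.
Proof.
  intros Hd; induction N as [|a N IH]; simpl; [lra|]. specialize (Hd a Y). lra.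
Qed.

Lemma fold_min_in {X : Type} (d : X -> X -> R) (N : list X) (a : X) (cs : list X) :
  exists w, In w (a :: cs) /\
    fold_right (fun z acc => Rmin (SC d N z) acc) (SC d N a) cs = SC d N w.
Proof.
  induction cs as [|z cs IH]; simpl.
  - exists a; auto.
  - destruct IH as [w [Hw Hw']]. rewrite Hw'.
    unfold Rmin; destruct (Rle_dec (SC d N z) (SC d N w)).
    + exists z; simpl; auto.
    + exists w; simpl in *; intuition.
Qed.

Lemma minSC_in {X : Type} (d : X -> X -> R) (N C : list X) :
  C <> nil -> exists w, In w C /\ minSC d N C = SC d N w.
Proof.
  destruct C as [|c cs]; [congruence|]. intros _. apply fold_min_in.
Qed.

Theorem mainTheorem13 :
  forall (X : Type) (d : X -> X -> R) (N C : list X)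
    (beats : X -> X -> Prop) (lam : R) (Zstar : X),
    is_metric d ->
    C <> nil -> NoDup C ->
    pairwise_rule C beats ->
    lambda_bounded d N C beats lam ->
    (forall Z : X, SC d N Zstar <= SC d N Z) ->
    0 < minSC d N C ->
    (* (i) two candidates, P the winner *)
    (forall P : X,
        length C = 2%nat ->
        wins C beats P ->
        let deltaI := SC d N P / minSC d N C in
        1 < deltaI ->
        SC d N P / SC d N Zstar <= lam * deltaI / (deltaI - 1))
    /\
    (* (ii) arbitrary candidates, P in the uncovered set *)
    (forall P : X,
        uncovered C beats P ->
        let deltaI := SC d N P / minSC d N C in
        1 < deltaI ->
        SC d N P / SC d N Zstar <= 2 * lam * deltaI / (deltaI - 1)).
Proof.
  intros X d N C beats lam Zstar Hmet HC _ _ Hlam _ Hm.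
  destruct (minSC_in d N C HC) as [W [HW HWe]].
  set (m := minSC d N C) in *.
  assert (HT : 0 <= SC d N Zstar) by (apply SC_nonneg; apply Hmet).
  assert (gt : forall S, 1 < S / m -> m < S).
  { intros S H. apply (Rmult_lt_compat_r m) in H; auto.
    unfold Rdiv in H; rewrite Rmult_assoc, Rinv_l in H; lra. }
  split.
  - intros P _ [HP Hwin] deltaI Hd. subst deltaI.
    pose proof (gt _ Hd) as HS.
    assert (WP : W <> P) by (intro; subst; lra).
    pose proof (Hlam P W HP HW (Hwin W HW WP) Zstar) as H.
    assert (0 < SC d N Zstar).
    { destruct HT as [|HT]; auto. rewrite <- HT in H. lra. }
    apply key; auto; lra.
  - intros P [HP Hunc] deltaI Hd. subst deltaI.
    pose proof (gt _ Hd) as HS.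
    assert (WP : W <> P) by (intro; subst; lra).
    assert (H : SC d N P - m <= 2 * lam * SC d N Zstar
                /\ 0 < lam * SC d N Zstar).
    { destruct (Hunc W HW WP) as [Hb | [Y [HY [H1 H2]]]].
      + pose proof (Hlam P W HP HW Hb Zstar). split; lra.
      + pose proof (Hlam P Y HP HY H1 Zstar).
        pose proof (Hlam Y W HY HW H2 Zstar). split; lra. }
    destruct H as [H1 H2].
    assert (0 < SC d N Zstar).
    { destruct HT as [|HT]; auto. rewrite <- HT in H2. lra. }
    apply key; auto; lra.
Qed.
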